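(* Let $N=\{1,\dots,n\}$ be agents and $M=\{1,\dots,m\}$ chores, where all agents share an identical additive valuation $V$ with $V(\{j\})\le0$ for all $j$ and $V(M)=-1$, and shares $s_i\in(0,1]$ with $\sum_is_i=1$. Let $\langle X_1,\dots,X_n\rangle$ be the output of Algorithm $\mathsf{EgalGreedy}$. Then $V(X_i)\ge 2\,\mathsf{WMMS}_i$ for every $i\in N$.
   Context: Algorithm $\mathsf{EgalGreedy}$: start with $X_i=\emptyset$ for all $i$; order the chores so that $V(\{1\})\le V(\{2\})\le\dots\le V(\{m\})$ (most costly first); for $j=1,\dots,m$ in this order, pick $i^*\in\arg\max_{i\in N}\frac{V(X_i\cup\{j\})}{s_i}$ (ties broken arbitrarily) and set $X_{i^*}\leftarrow X_{i^*}\cup\{j\}$; return $\langle X_1,\dots,X_n\rangle$. The weighted maxmin share is $\mathsf{WMMS}_i:=\max_{\langle Y_1,\dots,Y_n\rangle}\min_{k\in N}V(Y_k)\frac{s_i}{s_k}$, the maximum over all ordered partitions of $M$ into $n$ possibly empty bundles. *)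

(* Defs.v *)
From mathcomp Require Import all_boot all_order all_algebra all_fingroup.
Set Implicit Arguments. Unset Strict Implicit. Unset Printing Implicit Defensive.
Import Order.TTheory GRing.Theory Num.Theory.
Local Open Scope ring_scope.

(* Agents are 'I_n, chores are 'I_m.  The common additive valuation is given
   by its values on singletons  v : 'I_m -> R. *)

Definition Val (R : realFieldType) (m : nat) (v : 'I_m -> R) (S : {set 'I_m}) : R :=
  \sum_(j in S) v j.

(* the bundle of agent i under an assignment (ordered partition)
   Y : 'I_m -> 'I_n  of the chores into n possibly empty bundles *)
Definition bundle (m n : nat) (Y : 'I_m -> 'I_n) (i : 'I_n) : {set 'I_m} :=
  [set j | Y j == i].

(* Both max and min are over finite nonempty index sets; the big operators
   are seeded with one of their own terms (min: k = i; max: the partition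
   giving all chores to i), so they are the genuine max / min. *)
Definition wmms_val (R : realFieldType) (m n : nat) (v : 'I_m -> R)
  (s : 'I_n -> R) (i : 'I_n) (Y : 'I_m -> 'I_n) : R :=
  \big[Num.min/ Val v (bundle Y i) * (s i / s i)]_(k : 'I_n)
     (Val v (bundle Y k) * (s i / s k)).

Definition WMMS (R : realFieldType) (m n : nat) (v : 'I_m -> R)
  (s : 'I_n -> R) (i : 'I_n) : R :=
  \big[Num.max/ wmms_val v s i (fun _ => i)]_(Y : {ffun 'I_m -> 'I_n})
     wmms_val v s i Y.

(* Run of EgalGreedy.  sigma is the processing order: step t (t = 0..m-1)
   processes chore sigma t; the order must satisfy
   V({sigma 0}) <= V({sigma 1}) <= ... (most costly first).
   a j is the agent receiving chore j. *)
Definition prefix_bundle (m n : nat) (sigma : {perm 'I_m}) (a : 'I_m -> 'I_n)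
  (i : 'I_n) (t : nat) : {set 'I_m} :=
  [set sigma u | u : 'I_m & (u < t)%N && (a (sigma u) == i)].

Definition greedy_order (R : realFieldType) (m : nat) (v : 'I_m -> R)
  (sigma : {perm 'I_m}) : Prop :=
  forall t u : 'I_m, (t <= u)%N -> v (sigma t) <= v (sigma u).

(* a is an output of EgalGreedy with processing order sigma, for some
   (arbitrary) tie-breaking: at each step the chosen agent maximises
   V(X_i U {j}) / s_i. *)
Definition egal_greedy_run (R : realFieldType) (m n : nat) (v : 'I_m -> R)
  (s : 'I_n -> R) (sigma : {perm 'I_m}) (a : 'I_m -> 'I_n) : Prop :=
  greedy_order v sigma /\
  forall t : 'I_m, forall i : 'I_n,
    Val v (prefix_bundle sigma a i t :|: [set sigma t]) / s i <=
    Val v (prefix_bundle sigma a (a (sigma t)) t :|: [set sigma t])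
      / s (a (sigma t)).

(* Main.v *)
Require Import Defs.
From mathcomp Require Import all_boot all_order all_algebra all_fingroup.
From mathcomp Require Import ring lra.
Import Order.TTheory GRing.Theory Num.Theory.
Local Open Scope ring_scope.

Lemma bigmin_le_term (R : realFieldType) (I : eqType) (r : seq I) (P : pred I)
  (F : I -> R) x0 k : k \in r -> P k -> \big[Num.min/x0]_(i <- r | P i) F i <= F k.
Proof.
elim: r => // y r IH; rewrite inE big_cons => /orP[/eqP<-|hk] Pk.
  by rewrite Pk ge_min lexx.
case: (P y); last exact: IH.
by rewrite ge_min (IH hk Pk) orbT.
Qed.

Lemma Val_le0 (R : realFieldType) m (v : 'I_m -> R) (S : {set 'I_m}) :
  (forall j, v j <= 0) -> Val v S <= 0.
Proof. by move=> hv; apply: sumr_le0 => j _. Qed.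

Lemma Val_le_elem (R : realFieldType) m (v : 'I_m -> R) (S : {set 'I_m}) q :
  (forall j, v j <= 0) -> q \in S -> Val v S <= v q.
Proof.
move=> hv hq; rewrite /Val (bigD1 q) //=.
have : \sum_(i in S | i != q) v i <= 0 by apply: sumr_le0 => j _.
lra.
Qed.

Lemma mem_pb m n (sigma : {perm 'I_m}) (a : 'I_m -> 'I_n) k t q :
  (q \in prefix_bundle sigma a k t) = ((sigma^-1)%g q < t)%N && (a q == k).
Proof.
apply/imsetP/andP => [[u]|[h1 h2]].
  by rewrite inE => /andP[hu hk] ->; rewrite permK.
by exists ((sigma^-1)%g q); [rewrite inE h1 /= permKV h2 | rewrite permKV].
Qed.

Lemma wmms_le (R : realFieldType) m n (v : 'I_m -> R) (s : 'I_n -> R) i B :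
  (forall Y : 'I_m -> 'I_n, exists k, Val v (bundle Y k) * (s i / s k) <= B) ->
  WMMS v s i <= B.
Proof.
move=> h.
have hw : forall Y, wmms_val v s i Y <= B.
  move=> Y; have [k hk] := h Y.
  apply: le_trans hk; rewrite /wmms_val.
  by apply: bigmin_le_term => //; rewrite mem_index_enum.
rewrite /WMMS; apply: (big_ind (fun x => x <= B)) => //.
by move=> x y hx hy; rewrite ge_max hx hy.
Qed.

Theorem lemma4 (R : realFieldType) (n m : nat) (v : 'I_m -> R) (s : 'I_n -> R)
  (hv : forall j, v j <= 0)
  (hVM : Val v [set: 'I_m] = -1)
  (hs : forall i, 0 < s i <= 1)
  (hsum : \sum_(i < n) s i = 1)
  (sigma : {perm 'I_m}) (a : 'I_m -> 'I_n)
  (hrun : egal_greedy_run v s sigma a) :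
  forall i : 'I_n, Val v (bundle a i) >= 2 * WMMS v s i.
Proof.
move=> i.
have sp : forall k, 0 < s k by move=> k; case/andP: (hs k).
have [hord hgreedy] := hrun.
case: (boolP [exists q, a q == i]) => [/existsP [q0 hq0] | hnone]; last first.
  have -> : bundle a i = set0.
    apply/setP => q; rewrite !inE; apply/negP => hq.
    by move/negP: hnone; apply; apply/existsP; exists q.
  rewrite /Val big_set0.
  have : WMMS v s i <= 0.
    apply: wmms_le => Y; exists i.
    rewrite divff ?gt_eqF // mulr1; exact: Val_le0.
  lra.
have h0 : a (sigma ((sigma^-1)%g q0)) == i by rewrite permKV.
have [t ht tmax] := @arg_maxnP _ ((sigma^-1)%g q0) (fun u => a (sigma u) == i)
   (fun u => nat_of_ord u) h0.
move/eqP: ht => ht.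
set P := prefix_bundle sigma a.
have hbund : bundle a i = P i t :|: [set sigma t].
  apply/setP => x; rewrite !inE mem_pb.
  case: (eqVneq (a x) i) => hx /=.
    have hle : ((sigma^-1)%g x <= t)%N by apply: tmax; rewrite /= permKV hx.
    move: hle; rewrite leq_eqVlt => /orP[/eqP e|->] //.
    by rewrite (_ : x = sigma t) ?eqxx ?orbT // -(ord_inj e) permKV.
  by rewrite andbF; apply/esym/negP => /eqP e; rewrite e ht eqxx in hx.
set c := v (sigma t).
have hc : c <= 0 by apply: hv.
have notin : forall k, sigma t \notin P k t.
  by move=> k; rewrite mem_pb permK ltnn.
have hVU : forall k, Val v (P k t :|: [set sigma t]) = Val v (P k t) + c.
  move=> k; rewrite setUC /Val big_setU1 ?notin //= addrC //.
set D := Val v (bundle a i).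
have hD : D = Val v (P i t) + c by rewrite /D hbund hVU.
have hgr : forall k, (Val v (P k t) + c) * s i <= s k * D.
  move=> k; have := hgreedy t k; rewrite ht -hbund -/D hVU.
  rewrite ler_pdivrMr // mulrAC ler_pdivlMr // => h.
  by rewrite [s k * D]mulrC.
have hpre : forall q, ((sigma^-1)%g q <= t)%N -> v q <= c.
  by move=> q hq; have := hord _ _ hq; rewrite permKV.
have hPc : forall k (q : 'I_m), q \in P k t -> Val v (P k t) <= c.
  move=> k q hq; have hq1 := @Val_le_elem _ _ v _ _ hv hq; apply: (le_trans hq1).
  apply: hpre; move: hq; rewrite mem_pb => /andP[h _]; exact: ltnW.
suff claim : forall Y : 'I_m -> 'I_n, exists k,
    Val v (bundle Y k) * (s i / s k) <= D / 2.
  have := @wmms_le _ _ _ v s i _ claim; lra.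
move=> Y.
case: (boolP [exists k, 2 * Val v (bundle Y k) * s i <= s k * D])
   => [/existsP[k hk]|hno].
  exists k; rewrite mulrA ler_pdivrMr //; nra.
exfalso.
have hlt : forall k, s k * D < 2 * Val v (bundle Y k) * s i.
  move=> k; rewrite ltNge; apply: contra hno => h; apply/existsP; by exists k.
pose E k := c <= Val v (P k t).
have hE : forall q, ((sigma^-1)%g q <= t)%N -> ~~ E (Y q).
  move=> q hq; apply/negP => hEk.
  have h1 := hlt (Y q). have h2 := hgr (Y q).
  have h3 : Val v (bundle Y (Y q)) <= v q by apply: Val_le_elem; rewrite ?inE.
  have h4 := hpre q hq.
  have h5 := @Val_le0 _ _ v (P (Y q) t) hv.
  have si := sp i.
  rewrite /E in hEk.
  have h6 : 2 * Val v (bundle Y (Y q)) * s i <= (Val v (P (Y q) t) + c) * s i.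
    apply: ler_wpM2r; [exact: ltW | lra].
  lra.
pose SY := \sum_(k | ~~ E k) Val v (bundle Y k).
pose SP := \sum_(k | ~~ E k) Val v (P k t).
pose A := \sum_(k | ~~ E k) s k * D.
have e1 : A < 2 * s i * SY.
  rewrite /SY mulr_sumr; apply: ltr_sum.
    apply/hasP; exists (Y (sigma t)); first by rewrite mem_index_enum.
    by apply: hE; rewrite permK.
  move=> k _; have := hlt k; lra.
have ea : \sum_(q | ~~ E (Y q)) v q = SY.
  rewrite (partition_big Y (fun k => ~~ E k)) //=.
  apply: eq_bigr => k hk; rewrite /Val; apply: eq_bigl => q; rewrite inE.
  by case: eqVneq => [->|]; rewrite ?hk ?andbF.
have eb : \sum_(q | ~~ E (Y q)) v q <= \sum_(q | ((sigma^-1)%g q < t)%N) v q.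
  rewrite (bigID (fun q => ((sigma^-1)%g q < t)%N) (fun q => ~~ E (Y q))) /=.
  have -> : \sum_(q | ~~ E (Y q) && ((sigma^-1)%g q < t)%N) v q
          = \sum_(q | ((sigma^-1)%g q < t)%N) v q.
    apply: eq_bigl => q; case hq: ((sigma^-1)%g q < t)%N; rewrite ?andbF ?andbT //.
    by apply: hE; apply: ltnW.
  have : \sum_(q | ~~ E (Y q) && ~~ ((sigma^-1)%g q < t)%N) v q <= 0.
    by apply: sumr_le0 => q _.
  lra.
have ec : \sum_(q | ((sigma^-1)%g q < t)%N) v q = \sum_k Val v (P k t).
  rewrite (partition_big a (fun _ => true)) //=.
  by apply: eq_bigr => k _; rewrite /Val; apply: eq_bigl => q; rewrite mem_pb.
have ed : \sum_k Val v (P k t) <= SP.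
  rewrite (bigID E) /=.
  have : \sum_(k | E k) Val v (P k t) <= 0.
    by apply: sumr_le0 => k _; apply: Val_le0.
  rewrite /SP; lra.
have e3 : 2 * s i * SP <= A.
  rewrite /SP /A mulr_sumr; apply: ler_sum => k hk.
  have := hgr k; have si := sp i; rewrite /E -ltNge in hk; nra.
have si := sp i.
have e4 : SY <= SP by lra.
have e5 : 2 * s i * SY <= 2 * s i * SP by apply: ler_wpM2l => //; lra.
lra.
Qed.
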